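(* Let $\mathbf{A}\in\mathbb{R}^{m\times n}$ with $m<n$, let $\mathbf{x}^*=(x_1^*,\dots,x_n^* )^T\in\mathbb{R}^n$, let $\mathbf{y}=\mathbf{A}\mathbf{x}^*$, and let $\mathbf{T}\subseteq\{1,\dots,n\}$ be arbitrary (it may contain indices outside the support of $\mathbf{x}^*$). Let $\mathbf{N}=\{j: x_j^*\neq 0\}$, $\mathbf{T}^c=\{1,\dots,n\}\setminus\mathbf{T}$, $\boldsymbol{\Delta}=\mathbf{N}\setminus\mathbf{T}$, and let $\mathbf{F}$ be the family of all subsets of $\boldsymbol{\Delta}$ (including $\emptyset$ and $\boldsymbol{\Delta}$). Then $\mathbf{x}^*$ is the unique solution of $$\min_{\mathbf{x}\in\mathbb{R}^n}\ \|\mathbf{x}_{\mathbf{T}^c}\|_1\quad\text{s.t.}\quad \mathbf{y}=\mathbf{A}\mathbf{x}$$ if and only if for every $\mathbf{I}\in\mathbf{F}$ and every $\boldsymbol{\delta}=(\delta_1,\dots,\delta_n)^T\in\mathbb{R}^n$ satisfying $$\mathbf{A}\boldsymbol{\delta}=\mathbf{0},\quad \|\boldsymbol{\delta}\|_1=1,\quad \delta_k x_k^*>0\ \text{for } k\in\mathbf{I},\quad \delta_k x_k^*\le 0\ \text{for } k\in\boldsymbol{\Delta}\setminus\mathbf{I},$$ one has $$\sum_{k\in\mathbf{T}^c\setminus\mathbf{I}}|\delta_k|-\sum_{k\in\mathbf{I}}|\delta_k|>0.$$ (Equivalently: for each $\mathbf{I}\in\mathbf{F}$ for which this constraint set is nonempty,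 the objective $\sum_{k\in\mathbf{T}^c\setminus\mathbf{I}}|\delta_k|-\sum_{k\in\mathbf{I}}|\delta_k|$ is strictly positive on the whole constraint set.)
   Context: For $\mathbf{x}\in\mathbb{R}^n$ and an index set $\mathbf{S}\subseteq\{1,\dots,n\}$, $\mathbf{x}_{\mathbf{S}}$ denotes the vector of entries of $\mathbf{x}$ with indices in $\mathbf{S}$. The optimization problem $\min\|\mathbf{x}_{\mathbf{T}^c}\|_1$ s.t. $\mathbf{y}=\mathbf{A}\mathbf{x}$ is called modified-CS, and $\mathbf{T}$ is the ''known part'' of the support. *)

(* Defs.v *)
(* real numbers abstracted as an arbitrary realFieldType. *)
From HB Require Import structures.
From mathcomp Require Import all_boot all_order all_algebra.
Set Implicit Arguments. Unset Strict Implicit. Unset Printing Implicit Defensive.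
Import Order.TTheory GRing.Theory Num.Theory.
Local Open Scope ring_scope.

Definition l1_on (R : realFieldType) (n : nat) (S : {set 'I_n}) (x : 'cV[R]_n) : R :=
  \sum_(i in S) `|x i 0|.

Definition l1 (R : realFieldType) (n : nat) (x : 'cV[R]_n) : R :=
  \sum_(i < n) `|x i 0|.

Definition supp (R : realFieldType) (n : nat) (x : 'cV[R]_n) : {set 'I_n} :=
  [set j | x j 0 != 0].

Definition unique_modcs_solution (R : realFieldType) (m n : nat)
    (A : 'M[R]_(m, n)) (y : 'cV[R]_m) (T : {set 'I_n}) (x0 : 'cV[R]_n) : Prop :=
  A *m x0 = y /\
  forall x : 'cV[R]_n, A *m x = y -> x <> x0 -> l1_on (~: T) x0 < l1_on (~: T) x.

(* Main.v *)
Require Import Defs.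
From HB Require Import structures.
From mathcomp Require Import all_boot all_order all_algebra.
From mathcomp Require Import lra.
Import Order.TTheory GRing.Theory Num.Theory.
Local Open Scope ring_scope.

Local Open Scope ring_scope.
Lemma h1 (R : realFieldType) (a b : R) : a * b <= 0 -> `|a - b| = `|a| + `|b|.
Proof.
case: (lerP 0 a) => ha; case: (lerP 0 b) => hb => hab.
- rewrite (ger0_norm ha) (ger0_norm hb).
  have: a * b = 0 by apply/le_anti; rewrite hab mulr_ge0.
  move/eqP; rewrite mulf_eq0 => /orP [/eqP->|/eqP->]; rewrite ?sub0r ?subr0 ?normrN ?normr0 ?ger0_norm //; lra.
- rewrite (ger0_norm ha) (ltr0_norm hb) ger0_norm; lra.
- rewrite (ltr0_norm ha) (ger0_norm hb) ler0_norm; lra.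
- have : 0 < a * b by rewrite nmulr_rgt0.
  lra.
Qed.
Lemma h2 (R : realFieldType) (a b : R) : 0 < a * b -> `|b| <= `|a| -> `|a - b| = `|a| - `|b|.
Proof.
case: (lerP 0 a) => ha; case: (lerP 0 b) => hb => hab.
- rewrite (ger0_norm ha) (ger0_norm hb) => h; rewrite ger0_norm; lra.
- have : a * b <= 0 by rewrite mulr_ge0_le0 // ltW. lra.
- have : a * b <= 0 by rewrite mulr_le0_ge0 // ltW. lra.
- rewrite (ltr0_norm ha) (ltr0_norm hb) => h; rewrite ler0_norm; lra.
Qed.

Definition wt (R : realFieldType) (n : nat) (I : {set 'I_n}) (d : 'cV[R]_n) k :=
  if k \in I then - `|d k 0| else `|d k 0|.
Arguments wt {R n}.

Lemma Qsum (R : realFieldType) (n : nat) (I S : {set 'I_n}) (d : 'cV[R]_n) :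
  I \subset S -> l1_on (S :\: I) d - l1_on I d = \sum_(k in S) wt I d k.
Proof.
move=> sIS; rewrite (big_setID I) /= (setIidPr sIS) addrC.
congr (_ + _).
  rewrite /l1_on; apply: eq_bigr => k; rewrite !inE /wt => /andP[/negbTE -> _] //.
rewrite /l1_on -sumrN; apply: eq_bigr => k; rewrite /wt => -> //.
Qed.

Arguments Qsum {R n I S} d _.

Lemma l1_onZ (R : realFieldType) (n : nat) (S : {set 'I_n}) (c : R) (e : 'cV[R]_n) :
  0 <= c -> l1_on S (c *: e) = c * l1_on S e.
Proof.
move=> c0; rewrite /l1_on mulr_sumr; apply: eq_bigr => k _.
by rewrite mxE normrM ger0_norm.
Qed.

Lemma l1Z (R : realFieldType) (n : nat) (c : R) (e : 'cV[R]_n) :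
  0 <= c -> l1 (c *: e) = c * l1 e.
Proof.
move=> c0; rewrite /l1 mulr_sumr; apply: eq_bigr => k _.
by rewrite mxE normrM ger0_norm.
Qed.

Theorem theorem1 (R : realFieldType) (m n : nat) (A : 'M[R]_(m, n))
    (xs : 'cV[R]_n) (T : {set 'I_n}) :
  (m < n)%N ->
  unique_modcs_solution A (A *m xs) T xs <->
  (forall I : {set 'I_n}, I \subset (supp xs :\: T) ->
     forall d : 'cV[R]_n,
       A *m d = 0 ->
       l1 d = 1 ->
       (forall k, k \in I -> 0 < d k 0 * xs k 0) ->
       (forall k, k \in (supp xs :\: T) :\: I -> d k 0 * xs k 0 <= 0) ->
       0 < l1_on (~: T :\: I) d - l1_on I d).
Proof.
move=> _; split.
- move=> [_ Hu] I HI d Ad l1d Hpos Hneg.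
  have IT : I \subset ~: T.
    by apply/subsetP => k /(subsetP HI); rewrite !inE => /andP[].
  have Isupp : forall k, k \in I -> xs k 0 != 0.
    by move=> k /(subsetP HI); rewrite !inE => /andP[_].
  pose S := \sum_(k in I) `|xs k 0|^-1.
  have S0 : 0 <= S by apply: sumr_ge0 => k _; rewrite invr_ge0.
  pose t := (1 + S)^-1.
  have t0 : 0 < t by rewrite invr_gt0; lra.
  have tle : forall k, k \in I -> t <= `|xs k 0|.
    move=> k kI; have xk : 0 < `|xs k 0| by rewrite normr_gt0 Isupp.
    rewrite -[`|xs k 0|]invrK /t lef_pV2 ?posrE ?invr_gt0 //; last lra.
    have : `|xs k 0|^-1 <= S.
      rewrite /S (bigD1 k) //= lerDl; apply: sumr_ge0 => i _; rewrite invr_ge0.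
      done.
    lra.
  have dk1 : forall k, `|d k 0| <= 1.
    move=> k; rewrite -l1d /l1 (bigD1 k) //= lerDl.
    by apply: sumr_ge0 => i _.
  have Ax : A *m (xs - t *: d) = A *m xs.
    by rewrite mulmxBr -scalemxAr Ad scaler0 subr0.
  have nx : xs - t *: d <> xs.
    move/(congr1 (fun z => xs - z)); rewrite opprB addrC subrK subrr => /eqP.
    rewrite scaler_eq0 => /orP[/eqP t00|/eqP d0]; first by move: t0; rewrite t00 ltxx.
    move: l1d; rewrite d0 /l1 big1 => [/eqP|i _]; first by rewrite eq_sym oner_eq0.
    by rewrite mxE normr0.
  have := Hu _ Ax nx.
  have le : l1_on (~: T) (xs - t *: d) <=
            l1_on (~: T) xs + t * (l1_on (~: T :\: I) d - l1_on I d).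
    rewrite (Qsum _ IT) mulr_sumr /l1_on -big_split /=.
    apply: ler_sum => k kT; rewrite !mxE /wt.
    case: ifP => kI.
      rewrite h2.
      - by rewrite normrM (gtr0_norm t0); lra.
      - by rewrite mulrCA pmulr_rgt0 // mulrC Hpos.
      - rewrite normrM (gtr0_norm t0); apply: le_trans (tle _ kI).
        by rewrite ler_piMr // ltW.
    case: (eqVneq (xs k 0) 0) => xk.
      by rewrite xk sub0r normrN normrM (gtr0_norm t0) normr0 add0r.
    rewrite h1 ?normrM ?(gtr0_norm t0) //.
    rewrite mulrCA; apply: mulr_ge0_le0; first exact: ltW.
    rewrite mulrC; apply: Hneg; by rewrite !inE kI xk; move: kT; rewrite inE => ->.
  move=> lt; have := lt_le_trans lt le.
  rewrite ltrDl pmulr_rgt0 //.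
- move=> H; split => // x Ax nx.
  pose e := xs - x.
  have Ae : A *m e = 0 by rewrite mulmxBr Ax subrr.
  have e0 : e != 0 by rewrite subr_eq0 eq_sym; apply/eqP.
  have l1e0 : 0 <= l1 e by apply: sumr_ge0.
  have l1e : 0 < l1 e.
    rewrite lt_def l1e0 andbT; apply/eqP => h; move/eqP: e0; apply.
    apply/matrixP => i j; rewrite ord1 [in RHS]mxE.
    by apply/eqP/normr0P; apply: (psumr_eq0P _ h) => // k _.
  pose c := (l1 e)^-1.
  have c0 : 0 < c by rewrite invr_gt0.
  pose I := [set k in supp xs :\: T | 0 < e k 0 * xs k 0].
  have HI : I \subset supp xs :\: T by apply/subsetP => k; rewrite inE => /andP[].
  have IT : I \subset ~: T.
    by apply/subsetP => k /(subsetP HI); rewrite !inE => /andP[].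
  have := H I HI (c *: e).
  rewrite -scalemxAr Ae scaler0 l1Z ?ltW // mulVf ?gt_eqF // => /(_ erefl erefl).
  rewrite !l1_onZ ?ltW // -mulrBr pmulr_rgt0 //.
  have hp : forall k, k \in I -> 0 < (c *: e) k 0 * xs k 0.
    move=> k; rewrite inE => /andP[_ h]; rewrite mxE -mulrA; exact: mulr_gt0.
  have hn : forall k, k \in (supp xs :\: T) :\: I -> (c *: e) k 0 * xs k 0 <= 0.
    move=> k; rewrite in_setD => /andP[kI ks]; rewrite inE ks /= -leNgt in kI.
    rewrite mxE -mulrA; apply: mulr_ge0_le0; [exact: ltW|exact: kI].
  move=> /(_ hp hn) Q0.
  have le : l1_on (~: T) xs + (l1_on (~: T :\: I) e - l1_on I e) <= l1_on (~: T) x.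
    rewrite (Qsum _ IT) /l1_on -big_split /=.
    apply: ler_sum => k kT.
    have xk : x k 0 = xs k 0 - e k 0 by rewrite /e !mxE opprB addrC subrK.
    rewrite xk /wt; case: ifP => kI.
      exact: lerB_dist.
    case: (eqVneq (xs k 0) 0) => xsk.
      by rewrite xsk sub0r normrN normr0 add0r.
    rewrite h1 //; rewrite mulrC leNgt; apply/negP => h; move/negbT: kI; rewrite inE.
    by rewrite h andbT !inE xsk; move: kT; rewrite inE => ->.
  lra.
Qed.
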